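(* Let $f:\mathbb{R}^n\times\mathbb{R}^m\to\mathbb{R}$ be twice continuously differentiable, $\mu$-strongly convex in $x$ and $\mu$-strongly concave in $y$ ($\mu>0$), with $\|\nabla F(z)\|\le L$ for all $z$ and $\nabla F$ being $L_2$-Lipschitz, where $F(z)=(\nabla_x f(x,y);-\nabla_y f(x,y))$, $z=(x;y)$. Let $m(z)=\frac12\|F(z)\|^2$. Fix a point $z^k=(x^k;y^k)$, let $g^k=\nabla f(z^k)$, $H^k=\nabla^2 f(z^k)$, and for $\gamma>0$ define $$f_k(x,y;\gamma)=f(z^k)+\langle g^k,z-z^k\rangle+\tfrac12(z-z^k)^\top H^k(z-z^k)+\tfrac{\gamma}{3}\|x-x^k\|^3-\tfrac{\gamma}{3}\|y-y^k\|^3.$$ Let $(\tilde x,\tilde y)$ be the saddle point of $\min_x\max_y f_k(x,y;\gamma)$ and set $u^k=\tilde x-x^k$, $v^k=\tilde y-y^k$, $d^k=(u^k;v^k)$. Then, if $\gamma=\gamma^k>0$ is chosen small enough, $\gamma^k(\|u^k\|+\|v^k\|)<\mu$, and consequently $d^k$ is a descent direction for $m$ at $z^k$: $$\langle\nabla m(z^k),d^k\rangle\le-\frac{\mu^2}{2}\|d^k\|^2.$$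
   Context: $\|\cdot\|$ is the Euclidean norm for vectors and the largest singular value for matrices. The saddle point $(\tilde x,\tilde y)$ is characterized by the first-order conditions $g_x^k+H_{xx}^ku^k+\gamma\|u^k\|u^k+H_{xy}^kv^k=0$ and $g_y^k+H_{yy}^kv^k-\gamma\|v^k\|v^k+(H_{xy}^k)^\top u^k=0$, where $g^k=(g^k_x;g^k_y)$ and $H^k$ has blocks $H^k_{xx},H^k_{xy},H^k_{yy}$. *)

(* Defs.v *)
From HB Require Import structures.
From mathcomp Require Import all_boot all_order all_algebra.
From mathcomp Require Import all_classical all_reals all_analysis.
Set Implicit Arguments. Unset Strict Implicit. Unset Printing Implicit Defensive.
Import Order.TTheory GRing.Theory Num.Theory.
Import numFieldNormedType.Exports.
Local Open Scope classical_set_scope.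
Local Open Scope ring_scope.

Section Defs.
Variable R : realType.

Definition innerp (k : nat) (a b : 'cV[R]_k) : R := (a^T *m b) 0 0.
Definition enorm (k : nat) (a : 'cV[R]_k) : R := Num.sqrt (innerp a a).

Definition opnorm (p q : nat) (A : 'M[R]_(p, q)) : R :=
  sup [set enorm (A *m v) | v in [set v : 'cV[R]_q | enorm v <= 1]].

Definition basis_vec (k : nat) (i : 'I_k) : 'cV[R]_k := delta_mx i 0.
Definition partialD (k : nat) (g : 'cV[R]_k -> R) (i : 'I_k) (z : 'cV[R]_k) : R :=
  'D_(basis_vec i) g z.

Definition gradv (k : nat) (g : 'cV[R]_k -> R) (z : 'cV[R]_k) : 'cV[R]_k :=
  \col_i partialD g i z.

Definition hessmx (k : nat) (g : 'cV[R]_k -> R) (z : 'cV[R]_k) : 'M[R]_k :=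
  \matrix_(i, j) partialD (partialD g j) i z.

Definition jacmx (p q : nat) (G : 'cV[R]_p -> 'cV[R]_q) (z : 'cV[R]_p)
  : 'M[R]_(q, p) :=
  \matrix_(i, j) partialD (fun w => G w i 0) j z.

(* Twice continuously differentiable: all partial derivatives of order <= 2
   exist everywhere and are continuous (equivalent to C^2 in finite dim). *)
Definition C2 (k : nat) (g : 'cV[R]_k -> R) : Prop :=
  continuous g /\
  (forall i z, derivable g z (basis_vec i)) /\
  (forall i, continuous (partialD g i)) /\
  (forall i j z, derivable (partialD g i) z (basis_vec j)) /\
  (forall i j, continuous (partialD (partialD g i) j)).

Definition strongly_convex (k : nat) (mu : R) (h : 'cV[R]_k -> R) : Prop :=
  forall (a b : 'cV[R]_k) (t : R), 0 <= t <= 1 ->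
    h (t *: a + (1 - t) *: b) <=
      t * h a + (1 - t) * h b - mu / 2 * t * (1 - t) * enorm (a - b) ^+ 2.

Definition strongly_concave (k : nat) (mu : R) (h : 'cV[R]_k -> R) : Prop :=
  strongly_convex mu (fun a => - h a).

Section Saddle.
Variables n m : nat.
(* f is defined on R^n x R^m, represented on R^(n+m) with z = (x;y) = col_mx x y. *)
Variable f : 'cV[R]_(n + m) -> R.

Definition Fop (z : 'cV[R]_(n + m)) : 'cV[R]_(n + m) :=
  col_mx (usubmx (gradv f z)) (- dsubmx (gradv f z)).

Definition merit (z : 'cV[R]_(n + m)) : R := 1 / 2 * enorm (Fop z) ^+ 2.

Definition fmodel (zk : 'cV[R]_(n + m)) (gamma : R)
    (x : 'cV[R]_n) (y : 'cV[R]_m) : R :=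
  let z := col_mx x y in
  f zk + innerp (gradv f zk) (z - zk)
  + 1 / 2 * ((z - zk)^T *m hessmx f zk *m (z - zk)) 0 0
  + gamma / 3 * enorm (x - usubmx zk) ^+ 3
  - gamma / 3 * enorm (y - dsubmx zk) ^+ 3.

End Saddle.

Definition is_saddle (n m : nat) (h : 'cV[R]_n -> 'cV[R]_m -> R)
    (xt : 'cV[R]_n) (yt : 'cV[R]_m) : Prop :=
  forall x y, h xt y <= h xt yt /\ h xt yt <= h x yt.

End Defs.

(* Main.v *)
Require Import Defs.
From HB Require Import structures.
From mathcomp Require Import all_boot all_order all_algebra.
From mathcomp Require Import all_classical all_reals all_analysis.
From mathcomp Require Import ring lra.
Import Order.TTheory GRing.Theory Num.Theory.
Local Open Scope ring_scope.

Module Helpers.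
Import numFieldNormedType.Exports.
Local Open Scope classical_set_scope.
Local Open Scope ring_scope.


Section S.
Variable R : realType.

Lemma cont_eps k (G : 'cV[R]_k -> R) z : {for z, continuous G} ->
  forall eps, 0 < eps -> exists2 d, 0 < d &
    forall q : 'cV[R]_k, (forall i, `|z i 0 - q i 0| < d) -> `|G z - G q| < eps.
Proof.
move=> cG eps e0.
have := cG; move/cvgrPdist_lt => /(_ eps e0).
move/nbhs_ballP => [d d0 H]. exists d => // q Hq; apply: H.
split => // i j. rewrite (ord1 j). rewrite /ball /=. exact: Hq.
Qed.

Lemma der_eps (phi : R -> R) a : derivable phi a 1 ->
  forall eps, 0 < eps -> exists2 d, 0 < d &
    forall h, h != 0 -> `|h| < d -> `|'D_1 phi a - h^-1 * (phi (h + a) - phi a)| <= eps.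
Proof.
move=> dphi eps e0.
have := dphi. move/cvgrPdist_le => /(_ eps e0).
rewrite near_withinE. move/nbhs_ballP => [d d0 H]. exists d => // h h0 hd.
have := H h. rewrite /ball /= sub0r normrN => /(_ hd h0). by rewrite [h%:A]mulr1.
Qed.
Variable k : nat.
Implicit Types (G : 'cV[R]_k -> R) (p w : 'cV[R]_k).

Lemma line_dq_eq G p w t :
  (fun h : R => h^-1 *: (((fun s : R => G (s *: w + p)) \o shift t) (h *: (1:R)) - G (t *: w + p)))
  = (fun h : R => h^-1 *: ((G \o shift (t *: w + p)) (h *: w) - G (t *: w + p))).
Proof.
apply/funext => h /=. by rewrite [h *: 1]mulr1 scalerDl addrA.
Qed.

Lemma line_derivable G p w t :
  derivable (fun s : R => G (s *: w + p)) t 1 <-> derivable G (t *: w + p) w.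
Proof. by rewrite /derivable line_dq_eq. Qed.

Lemma line_derive G p w t :
  'D_1 (fun s : R => G (s *: w + p)) t = 'D_w G (t *: w + p).
Proof. by rewrite /derive line_dq_eq. Qed.

Lemma line_mvt G p w h : (forall q, derivable G q w) ->
  exists c : R, `|c| <= `|h| /\ G (h *: w + p) - G p = h * 'D_w G (c *: w + p).
Proof.
move=> dG.
pose phi := fun s : R => G (s *: w + p).
have dphi : forall x : R, is_derive x (1:R) phi ('D_w G (x *: w + p)).
  move=> x; rewrite -line_derive; apply: derivableP; apply/line_derivable; exact: dG.
have cphi : forall a b : R, {within `[a, b], continuous phi}.
  move=> a b; apply: derivable_within_continuous => x _; by case: (dphi x).
have phi0 : phi 0 = G p by rewrite /phi scale0r add0r.
have phih : phi h = G (h *: w + p) by [].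
case: (ltgtP h 0) => [hlt|hgt|->].
- have [c cin E] := MVT hlt (fun x _ => dphi x) (cphi h 0).
  exists c; split.
    move: cin; rewrite in_itv /= => /andP[c1 c2].
    rewrite !ltr0_norm //; lra.
  rewrite -phih -phi0; lra.
- have [c cin E] := MVT hgt (fun x _ => dphi x) (cphi 0 h).
  exists c; split.
    move: cin; rewrite in_itv /= => /andP[c1 c2].
    rewrite !gtr0_norm //; lra.
  rewrite -phih -phi0; lra.
- by exists 0; rewrite normr0 lexx scale0r add0r subrr mul0r.
Qed.
End S.


Section S.
Variable R : realType.
Variable k : nat.

Lemma cont_eps_all (F : 'I_k -> 'cV[R]_k -> R) z :
  (forall i, {for z, continuous (F i)}) ->
  forall eps, 0 < eps -> exists2 d, 0 < d &
    forall q : 'cV[R]_k, (forall i, `|z i 0 - q i 0| < d) ->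
      forall j, `|F j z - F j q| < eps.
Proof.
move=> cF eps e0.
have : \forall q \near z, forall j, `|F j z - F j q| < eps.
  apply: (@filter_forall _ _ (fun j q => `|F j z - F j q| < eps) (nbhs z) (nbhs_filter z)) => j.
  by have := cF j; move/cvgrPdist_lt => /(_ eps e0).
move/nbhs_ballP => [d d0 H]. exists d => // q Hq; apply: H.
split => // i j. rewrite (ord1 j). rewrite /ball /=. exact: Hq.
Qed.

Lemma le_sum_term (w : 'I_k -> R) i : `|w i| <= \sum_j `|w j|.
Proof.
rewrite (bigD1 i) //= lerDl. by apply: sumr_ge0 => j _.
Qed.

Definition Pw (j : nat) (w : 'cV[R]_k) : 'cV[R]_k :=
  \col_i (if (i < j)%N then w i 0 else 0).

Lemma Pw0 w : Pw 0 w = 0.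
Proof. by apply/matrixP => i c; rewrite !mxE. Qed.

Lemma Pwk w : Pw k w = w.
Proof. by apply/matrixP => i c; rewrite (ord1 c) !mxE ltn_ord. Qed.

Lemma PwS w (j : 'I_k) : Pw j.+1 w = w j 0 *: basis_vec R j + Pw j w.
Proof.
apply/matrixP => i c; rewrite (ord1 c) !mxE /= ltnS leq_eqVlt.
case: (eqVneq i j) => [->|nij] /=.
  by rewrite eqxx ltnn /= mulr1 addr0.
have -> : (nat_of_ord i == nat_of_ord j) = false by apply/negbTE.
by rewrite mulr0 add0r.
Qed.


Lemma dir_deriv (g : 'cV[R]_k -> R) :
  (forall i z, derivable g z (basis_vec R i)) -> (forall i, continuous (partialD g i)) ->
  forall z w, is_derive z w g (\sum_i w i 0 * partialD g i z).
Proof.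
move=> dg cg z w.
set S := \sum_i _.
suff cv : (fun h : R => h^-1 *: ((g \o shift z) (h *: w) - g z)) @ 0^' --> S.
  apply: DeriveDef; first by apply/cvg_ex; exists S.
  exact: cvg_lim cv.
apply/cvgrPdist_le => eps e0.
set Ws := \sum_i `|w i 0|.
have Ws0 : 0 <= Ws by apply: sumr_ge0.
have e'0 : 0 < eps / (Ws + 1) by apply: divr_gt0; lra.
have [d d0 Hd] := cont_eps_all (fun i => partialD g i) z (fun i => cg i z) _ e'0.
rewrite near_withinE; apply/nbhs_ballP.
exists (d / (2 * Ws + 1)); first by apply: divr_gt0; lra.
move=> h; rewrite /ball /= sub0r normrN => hd hn0.
have hpos : 0 < `|h| by rewrite normr_gt0.
have hd' : `|h| * (2 * Ws + 1) < d by move: hd; rewrite ltr_pdivlMr //; lra.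
have tel : g (h *: w + z) - g z =
    \sum_(j < k) (g (h *: Pw j.+1 w + z) - g (h *: Pw j w + z)).
  rewrite -(big_mkord xpredT (fun j => g (h *: Pw j.+1 w + z) - g (h *: Pw j w + z))).
  by rewrite telescope_sumr // Pwk Pw0 scaler0 add0r.
have term : forall j : 'I_k,
    `|(g (h *: Pw j.+1 w + z) - g (h *: Pw j w + z)) - h * (w j 0 * partialD g j z)|
      <= `|h| * `|w j 0| * (eps / (Ws + 1)).
  move=> j.
  rewrite PwS scalerDr scalerA -(addrA ((h * w j 0) *: basis_vec R j)).
  have [c [hc ->]] := @line_mvt R k g (h *: Pw j w + z) (basis_vec R j) (h * w j 0) (fun q => dg j q).
  set q := c *: basis_vec R j + (h *: Pw j w + z).
  have -> : 'D_(basis_vec R j) g q = partialD g j q by [].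
  have Hq : forall i, `|z i 0 - q i 0| < d.
    move=> i.
    have -> : z i 0 - q i 0 = - (c * basis_vec R j i 0 + h * Pw j w i 0).
      rewrite /q !mxE; ring.
    have hb : `|basis_vec R j i 0| <= 1.
      by rewrite /basis_vec mxE; case: (_ && _); rewrite ?normr1 ?normr0.
    have hp : `|Pw j w i 0| <= Ws.
      rewrite mxE; case: ifP => _; last by rewrite normr0.
      exact: (le_sum_term (fun i => w i 0) i).
    have hwj : `|w j 0| <= Ws := le_sum_term (fun i => w i 0) j.
    rewrite normrN; apply: (le_lt_trans (ler_normD _ _)); rewrite !normrM.
    have h1 : `|c| * `|basis_vec R j i 0| <= `|h| * Ws.
      apply: (le_trans (y := `|c|)).
        by rewrite -[X in _ <= X]mulr1; apply: ler_wpM2l.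
      apply: (le_trans hc); rewrite normrM; apply: ler_wpM2l => //.
    have h2 : `|h| * `|Pw j w i 0| <= `|h| * Ws by apply: ler_wpM2l.
    lra.
  have := Hd q Hq j => /= Hj.
  have -> : h * w j 0 * partialD g j q - h * (w j 0 * partialD g j z)
     = (h * w j 0) * (partialD g j q - partialD g j z) by ring.
  rewrite normrM normrM; apply: ler_wpM2l; first by apply: mulr_ge0.
  by rewrite distrC; apply: ltW.
have sumb : `|\sum_(j < k) (g (h *: Pw j.+1 w + z) - g (h *: Pw j w + z)) - h * S|
    <= `|h| * eps.
  rewrite /S mulr_sumr -sumrB.
  apply: (le_trans (ler_norm_sum _ _ _)).
  apply: (le_trans (ler_sum _ (fun j _ => term j))).
  rewrite -mulr_suml -mulr_sumr -/Ws -mulrA.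
  apply: ler_wpM2l => //.
  rewrite mulrA ler_pdivrMr; last by lra.
  nra.
rewrite /= tel.
have -> : S - h^-1 *: \sum_(j < k) (g (h *: Pw j.+1 w + z) - g (h *: Pw j w + z))
   = - h^-1 * (\sum_(j < k) (g (h *: Pw j.+1 w + z) - g (h *: Pw j w + z)) - h * S).
  rewrite /GRing.scale /=. field. exact: hn0.
rewrite normrM normrN normfV ler_pdivrMl //.
Qed.

Lemma trans_dq_eq (G : 'cV[R]_k -> R) t x v :
  (fun h : R => h^-1 *: (((fun q => G (q + t)) \o shift x) (h *: v) - G (x + t)))
  = (fun h : R => h^-1 *: ((G \o shift (x + t)) (h *: v) - G (x + t))).
Proof. by apply/funext => h /=; rewrite addrA. Qed.

Lemma trans_derivable (G : 'cV[R]_k -> R) t x v :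
  derivable (fun q => G (q + t)) x v <-> derivable G (x + t) v.
Proof. by rewrite /derivable trans_dq_eq. Qed.

Lemma trans_derive (G : 'cV[R]_k -> R) t x v :
  'D_v (fun q => G (q + t)) x = 'D_v G (x + t).
Proof. by rewrite /derive trans_dq_eq. Qed.

Lemma basis_entry_le (i l : 'I_k) : `|basis_vec R i l 0| <= 1.
Proof. by rewrite /basis_vec mxE; case: (_ && _); rewrite ?normr1 ?normr0. Qed.

Lemma mixed_mvt (g : 'cV[R]_k -> R) :
  (forall i z, derivable g z (basis_vec R i)) ->
  (forall i j z, derivable (partialD g i) z (basis_vec R j)) ->
  forall (i j : 'I_k) z (h : R), exists c1 c2 : R, `|c1| <= `|h| /\ `|c2| <= `|h| /\
    g (h *: basis_vec R i + z + h *: basis_vec R j) - g (h *: basis_vec R i + z)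
    - g (z + h *: basis_vec R j) + g z
    = h * h * partialD (partialD g i) j
        (c2 *: basis_vec R j + (c1 *: basis_vec R i + z)).
Proof.
move=> dg ddg i j z h.
set a := basis_vec R i; set b := basis_vec R j.
pose G1 := fun q => g (q + h *: b) - g q.
have dG1 : forall q, derivable G1 q a.
  move=> q; apply: derivableB; last exact: dg.
  by apply/trans_derivable; exact: dg.
have [c1 [hc1 E1]] := @line_mvt R k G1 z a h dG1.
have dG1v : forall q, 'D_a G1 q = partialD g i (q + h *: b) - partialD g i q.
  move=> q; rewrite deriveB; last exact: dg.
    by rewrite trans_derive.
  by apply/trans_derivable; exact: dg.
have [c2 [hc2 E2]] := @line_mvt R k (partialD g i) (c1 *: a + z) b h (fun q => ddg i j q).
exists c1, c2; split => //; split => //.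
have -> : g (h *: a + z + h *: b) - g (h *: a + z) - g (z + h *: b) + g z
   = G1 (h *: a + z) - G1 z by rewrite /G1; ring.
rewrite E1 dG1v [c1 *: a + z + _]addrC E2 mulrA.
by [].
Qed.

Lemma dist_tri (eps x y a b : R) : `|x - a| < eps -> `|y - b| < eps -> a = b -> `|x - y| < 2 * eps.
Proof.
move=> h1 h2 e; rewrite -e in h2; have -> : x - y = (x - a) + (a - y) by ring.
apply: le_lt_trans (ler_normD _ _) _. rewrite distrC in h2. lra.
Qed.

Lemma schwarz (g : 'cV[R]_k -> R) :
  (forall i z, derivable g z (basis_vec R i)) ->
  (forall i j z, derivable (partialD g i) z (basis_vec R j)) ->
  (forall i j, continuous (partialD (partialD g i) j)) ->
  forall z i j, partialD (partialD g i) j z = partialD (partialD g j) i z.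
Proof.
move=> dg ddg cdg z i j.
have key : forall eps, 0 < eps -> `|partialD (partialD g i) j z - partialD (partialD g j) i z| < 2 * eps.
  move=> eps e0.
  have [d1 d10 H1] := @cont_eps R k _ z (cdg i j z) eps e0.
  have [d2 d20 H2] := @cont_eps R k _ z (cdg j i z) eps e0.
  set h := Num.min d1 d2 / 3.
  have hpos : 0 < h by rewrite /h divr_gt0 // lt_min d10 d20.
  have hd1 : 2 * h < d1.
    have : Num.min d1 d2 <= d1 by rewrite ge_min lexx.
    rewrite /h; lra.
  have hd2 : 2 * h < d2.
    have : Num.min d1 d2 <= d2 by rewrite ge_min lexx orbT.
    rewrite /h; lra.
  clearbody h.
  have [c1 [c2 [hc1 [hc2 E]]]] := mixed_mvt g dg ddg i j z h.
  have [c1' [c2' [hc1' [hc2' E']]]] := mixed_mvt g dg ddg j i z h.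
  have bnd : forall (a b : 'I_k) (c c' : R) (d : R), `|c| <= h -> `|c'| <= h -> 2 * h < d ->
     forall l, `|z l 0 - (c' *: basis_vec R b + (c *: basis_vec R a + z)) l 0| < d.
    move=> a b c c' d hc hc' hd l.
    have -> : z l 0 - (c' *: basis_vec R b + (c *: basis_vec R a + z)) l 0
      = - (c' * basis_vec R b l 0 + c * basis_vec R a l 0) by rewrite !mxE; ring.
    rewrite normrN; apply: (le_lt_trans (ler_normD _ _)); rewrite !normrM.
    have u1 : `|c'| * `|basis_vec R b l 0| <= h.
      apply: le_trans hc'; rewrite -[X in _ <= X]mulr1; apply: ler_wpM2l => //.
      exact: basis_entry_le.
    have u2 : `|c| * `|basis_vec R a l 0| <= h.
      apply: le_trans hc; rewrite -[X in _ <= X]mulr1; apply: ler_wpM2l => //.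
      exact: basis_entry_le.
    clear -u1 u2 hd. lra.
  have gh : `|h| = h by rewrite gtr0_norm.
  rewrite gh in hc1 hc2 hc1' hc2'.
  have A1 := H1 _ (bnd _ _ _ _ _ hc1 hc2 hd1).
  have A2 := H2 _ (bnd _ _ _ _ _ hc1' hc2' hd2).
  have EE : g (h *: basis_vec R j + z + h *: basis_vec R i) - g (h *: basis_vec R j + z)
      - g (z + h *: basis_vec R i) + g z
    = g (h *: basis_vec R i + z + h *: basis_vec R j) - g (h *: basis_vec R i + z)
      - g (z + h *: basis_vec R j) + g z.
    have -> : h *: basis_vec R j + z + h *: basis_vec R i
            = h *: basis_vec R i + z + h *: basis_vec R j.
      by apply/matrixP => l c; rewrite !mxE; ring.
    rewrite [h *: basis_vec R j + z]addrC [h *: basis_vec R i + z]addrC. ring.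
  rewrite EE E in E'.
  have hn : h != 0 by rewrite lt0r_neq0.
  have hh : h * h != 0 by rewrite mulf_neq0.
  have Eq := mulfI hh E'.
  exact: (@dist_tri _ _ _ _ _ (A1 j i) (A2 i j) Eq).
apply/eqP; rewrite -subr_eq0 -normr_eq0 eq_le normr_ge0 andbT leNgt.
apply/negP => pos.
have four : (0:R) < 4 by lra.
have := key _ (divr_gt0 pos four).
move: pos; move: (`|_ - _|) => x; clear. lra.
Qed.

End S.


Section S.
Variable R : realType.
Variable k : nat.

Lemma is_derive_sq (x : R) : is_derive x (1:R) (fun s : R => s * s) (2 * x).
Proof.
have H := @is_deriveM R R^o (@id R) (@id R) x 1 1 1 (is_derive_id _ _) (is_derive_id _ _).
have E : (fun s : R => s * s) = (@id R * @id R) by apply/funext.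
rewrite E; apply: is_derive_eq H _.
rewrite /GRing.scale /=. ring.
Qed.

Lemma le_eps (c D : R) : (forall e, 0 < e -> c <= D + e) -> c <= D.
Proof.
move=> H; rewrite leNgt; apply/negP => lt.
have := H ((c - D) / 2). have : 0 < (c - D) / 2 by apply: divr_gt0; lra.
move=> p /(_ p). lra.
Qed.

Lemma second_order (f : 'cV[R]_k -> R)
  (d1 : forall i z, derivable f z (basis_vec R i))
  (c1 : forall i, continuous (partialD f i))
  (d2 : forall i j z, derivable (partialD f i) z (basis_vec R j))
  (c2 : forall i j, continuous (partialD (partialD f i) j))
  (z E : 'cV[R]_k) (c sg : R) : (sg = 1 \/ sg = -1) ->
  (forall t : R, c * (t * t) <= sg * (f (t *: E + z) + f (t *: (- E) + z) - 2 * f z)) ->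
  c <= sg * \sum_i E i 0 * \sum_j E j 0 * partialD (partialD f i) j z.
Proof.
move=> hsg Hc.
set D := \sum_i _.
pose Phi := fun t : R => \sum_i E i 0 * partialD f i (t *: E + z).
have dphi : forall t, is_derive t (1:R) (fun s : R => f (s *: E + z)) (Phi t).
  move=> t; have H := @dir_deriv R k f d1 c1 (t *: E + z) E.
  apply: DeriveDef; first by apply/line_derivable; case: H.
  by rewrite line_derive; case: H.
have dpsi : forall t, is_derive t (1:R) (fun s : R => f (s *: (- E) + z)) (- Phi (- t)).
  move=> t; have H := @dir_deriv R k f d1 c1 (t *: (- E) + z) (- E).
  have e1 : t *: (- E) = (- t) *: E by rewrite scalerN scaleNr.
  apply: DeriveDef; first by apply/line_derivable; case: H.
  rewrite line_derive derive_val /Phi e1 -sumrN; apply: eq_bigr => i _.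
  by rewrite mxE mulNr.
have dPhi : is_derive (0:R) (1:R) Phi D.
  have E1 : Phi = \sum_i (E i 0 \*: (fun t : R => partialD f i (t *: E + z))).
    by apply/funext => t; rewrite fct_sumE; apply: eq_bigr => i _.
  rewrite E1 /D; apply: is_derive_sum => i.
  apply: is_deriveZ.
  have H := @dir_deriv R k (partialD f i) (d2 i) (c2 i) z E.
  apply: DeriveDef.
    by apply/line_derivable; rewrite scale0r add0r; case: H.
  by rewrite line_derive scale0r add0r derive_val.
have dP : derivable Phi 0 1 by case: dPhi.
have vP : 'D_1 Phi 0 = D by case: dPhi.
apply: le_eps => eps e0.
have [del del0 Hd] := @der_eps R Phi 0 dP eps e0.
rewrite vP in Hd.
set sl := del / 2.
have s0 : 0 < sl by rewrite /sl divr_gt0.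
pose chi := sg \*: ((fun s : R => f (s *: E + z)) + (fun s : R => f (s *: (- E) + z))
   - cst (2 * f z)) - c \*: (fun s : R => s * s).
have dchi : forall x, is_derive x (1:R) chi (sg *: (Phi x + - Phi (- x) - 0) - c *: (2 * x)).
  move=> x; rewrite /chi; eapply is_deriveB; last by eapply is_deriveZ; exact: is_derive_sq.
  eapply is_deriveZ.
  eapply is_deriveB; last exact: is_derive_cst.
  by eapply is_deriveD.
have cchi : {within `[0, sl], continuous chi}.
  by apply: derivable_within_continuous => x _; case: (dchi x).
have [xi xin Exi] := MVT s0 (fun x _ => dchi x) cchi.
have chiE : forall x, chi x = sg * (f (x *: E + z) + f (x *: (- E) + z) - 2 * f z) - c * (x * x).
  by move=> x.
have chis : 0 <= chi sl by rewrite chiE; have := Hc sl; lra.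
have chi0 : chi 0 = 0.
  rewrite chiE !scale0r !add0r. ring.
move: xin; rewrite in_itv /= => /andP[xi0 xis].
have xd : `|xi| < del by rewrite gtr0_norm //; rewrite /sl in xis; lra.
have A1 := Hd xi (lt0r_neq0 xi0) xd.
have n2 : - xi != 0 by rewrite oppr_eq0 lt0r_neq0.
have d2' : `|- xi| < del by rewrite normrN.
have A2 := Hd (- xi) n2 d2'.
rewrite !addr0 in A1 A2.
move: A1 A2; set q1 := xi^-1 * _; set q2 := (- xi)^-1 * _ => A1 A2.
have e1 : Phi xi - Phi 0 = xi * q1 by rewrite /q1 mulrA mulfV ?mul1r // lt0r_neq0.
have e2 : Phi (- xi) - Phi 0 = - xi * q2.
  by rewrite /q2 mulrA mulfV ?mul1r // oppr_eq0 lt0r_neq0.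
have V0 : 0 <= xi * (sg * (q1 + q2) - 2 * c).
  have : 0 <= (sg *: (Phi xi + - Phi (- xi) - 0) - c *: (2 * xi)) * sl.
    by move: Exi; rewrite chi0 !subr0 => <-.
  rewrite pmulr_lge0 // /GRing.scale /=.
  have -> : xi * (sg * (q1 + q2) - 2 * c) = sg * ((Phi xi - Phi 0) - (Phi (- xi) - Phi 0)) - c * (2 * xi).
    rewrite e1 e2; ring.
  by rewrite subr0 opprB addrA subrK.
rewrite pmulr_rge0 // in V0.
move: A1 A2 => /ler_normlP [A1 A1'] /ler_normlP [A2 A2'].
clear -A1 A2 A1' A2' V0 hsg; case: hsg => -> in V0 *; lra.
Qed.


End S.


Section S.
Variable R : realType.
Variable p : nat.
Implicit Types a b c : 'cV[R]_p.

Lemma innerpE a b : innerp a b = \sum_i a i 0 * b i 0.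
Proof. by rewrite /innerp !mxE; apply: eq_bigr => i _; rewrite mxE. Qed.

Lemma innerpC a b : innerp a b = innerp b a.
Proof. by rewrite !innerpE; apply: eq_bigr => i _; rewrite mulrC. Qed.

Lemma innerpDr a b c : innerp a (b + c) = innerp a b + innerp a c.
Proof. by rewrite !innerpE -big_split; apply: eq_bigr => i _; rewrite mxE mulrDr. Qed.

Lemma innerpDl a b c : innerp (b + c) a = innerp b a + innerp c a.
Proof. by rewrite ![innerp _ a]innerpC innerpDr. Qed.

Lemma innerpZr a (t : R) b : innerp a (t *: b) = t * innerp a b.
Proof. by rewrite !innerpE mulr_sumr; apply: eq_bigr => i _; rewrite mxE mulrCA. Qed.

Lemma innerpZl a (t : R) b : innerp (t *: b) a = t * innerp b a.
Proof. by rewrite ![innerp _ a]innerpC innerpZr. Qed.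

Lemma innerpNr a b : innerp a (- b) = - innerp a b.
Proof. by rewrite -scaleN1r innerpZr mulN1r. Qed.

Lemma innerpNl a b : innerp (- b) a = - innerp b a.
Proof. by rewrite innerpC innerpNr innerpC. Qed.

Lemma innerpBr a b c : innerp a (b - c) = innerp a b - innerp a c.
Proof. by rewrite innerpDr innerpNr. Qed.

Lemma innerpBl a b c : innerp (b - c) a = innerp b a - innerp c a.
Proof. by rewrite innerpDl innerpNl. Qed.

Lemma innerp0r a : innerp a 0 = 0.
Proof. by rewrite innerpE big1 // => i _; rewrite mxE mulr0. Qed.

Lemma innerp0l a : innerp 0 a = 0.
Proof. by rewrite innerpC innerp0r. Qed.

Lemma innerp_ge0 a : 0 <= innerp a a.
Proof. by rewrite innerpE; apply: sumr_ge0 => i _; rewrite -expr2 sqr_ge0. Qed.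

Lemma innerp_eq0 a : innerp a a = 0 -> a = 0.
Proof.
rewrite innerpE => /psumr_eq0P H.
apply/matrixP => i j; rewrite (ord1 j) mxE.
have H0 : forall i : 'I_p, true -> 0 <= a i 0 * a i 0 by move=> i0 _; rewrite -expr2 sqr_ge0.
have := H H0 i isT.
by move/eqP; rewrite mulf_eq0 orbb => /eqP.
Qed.

Lemma enorm_ge0 a : 0 <= enorm a.
Proof. exact: sqrtr_ge0. Qed.

Lemma enorm_sq a : enorm a ^+ 2 = innerp a a.
Proof. by rewrite /enorm sqr_sqrtr // innerp_ge0. Qed.

Lemma cauchy_schwarz2 a b : innerp a b ^+ 2 <= innerp a a * innerp b b.
Proof.
set A := innerp a a; set B := innerp b b; set C := innerp a b.
have B0 : 0 <= B by apply: innerp_ge0.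
case: (eqVneq B 0) => [Be|Bn].
  have b0 : b = 0 by apply: innerp_eq0.
  by rewrite /C /A /B b0 innerp0r expr0n /= mulr_ge0 // innerp_ge0.
have Bp : 0 < B by rewrite lt_def Bn.
have := innerp_ge0 (B *: a - C *: b).
rewrite innerpBl !innerpBr !innerpZl !innerpZr -/A -/B -/C (innerpC b a) -/C.
clear Bn; move: A B C Bp B0 => A B C Bp B0.
have -> : B * (B * A) - B * (C * C) - (C * (B * C) - C * (C * B))
   = B * (A * B - C ^+ 2) by ring.
rewrite pmulr_rge0 // subr_ge0 => H; exact: H.
Qed.

Lemma cauchy_schwarz a b : `|innerp a b| <= enorm a * enorm b.
Proof.
rewrite -ler_sqr ?nnegrE ?mulr_ge0 ?enorm_ge0 //.
by rewrite (real_normK (num_real _)) exprMn !enorm_sq cauchy_schwarz2.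
Qed.

Lemma enormD a b : enorm (a + b) <= enorm a + enorm b.
Proof.
rewrite -ler_sqr ?nnegrE ?addr_ge0 ?enorm_ge0 //.
rewrite enorm_sq innerpDl !innerpDr sqrrD !enorm_sq (innerpC b a).
have := cauchy_schwarz a b. have := ler_norm (innerp a b).
move: (innerp a b) (innerp a a) (innerp b b) (enorm a * enorm b) => x y z w.
rewrite mulr2n. lra.
Qed.

Lemma enormZ (t : R) a : enorm (t *: a) = `|t| * enorm a.
Proof.
apply/eqP; rewrite -(@eqrXn2 _ 2) // ?mulr_ge0 ?enorm_ge0 //.
by rewrite exprMn enorm_sq innerpZl innerpZr enorm_sq (real_normK (num_real _)) mulrA expr2.
Qed.

Lemma enormN a : enorm (- a) = enorm a.
Proof. by rewrite -scaleN1r enormZ normrN normr1 mul1r. Qed.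

Lemma cubic_bound (u e : 'cV[R]_p) (t : R) :
  `|enorm (u + t *: e) ^+ 3 - enorm u ^+ 3 - 3 * enorm u * (t * innerp u e)|
    <= t ^+ 2 * (enorm e ^+ 2 * (3 * enorm u + `|t| * enorm e)).
Proof.
have N0 := enorm_ge0 (u + t *: e).
have M0 := enorm_ge0 u.
have a0 := enorm_ge0 e.
have NM : enorm (u + t *: e) ^+ 2 = enorm u ^+ 2 + 2 * (t * innerp u e) + t ^+ 2 * enorm e ^+ 2.
  rewrite !enorm_sq innerpDl !innerpDr !innerpZl !innerpZr (innerpC e u).
  ring.
have up : enorm (u + t *: e) <= enorm u + `|t| * enorm e by have := enormD u (t *: e); rewrite enormZ.
have lo : enorm u <= enorm (u + t *: e) + `|t| * enorm e.
  have H := enormD (u + t *: e) ((- t) *: e).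
  by rewrite scaleNr addrK enormN enormZ in H.
have tt : `|t| ^+ 2 = t ^+ 2 := real_normK (num_real _).
have t0 := normr_ge0 t.
move: N0 M0 a0 NM up lo tt t0.
move: (enorm (u + t *: e)) (enorm u) (enorm e) (innerp u e) `|t| => N M a s T.
move=> N0 M0 a0 NM up lo tt t0.
have XE : N ^+ 3 - M ^+ 3 - 3 * M * (t * s)
    = (N - M) ^+ 2 * (N + M / 2) + 3 / 2 * M * (t ^+ 2 * a ^+ 2).
  have ts : t * s = (N ^+ 2 - M ^+ 2 - t ^+ 2 * a ^+ 2) / 2 by rewrite NM; field.
  by rewrite ts; field.
have d2 : (N - M) ^+ 2 <= t ^+ 2 * a ^+ 2.
  rewrite -tt -exprMn. have Ta : 0 <= T * a by apply: mulr_ge0.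
  rewrite !expr2. nra.
have P1 : (N - M) ^+ 2 * (N + M / 2) <= (t ^+ 2 * a ^+ 2) * (M + T * a + M / 2).
  apply: ler_pM => //; first by rewrite sqr_ge0.
    by apply: addr_ge0 => //; apply: divr_ge0.
  lra.
have P0 : 0 <= (N - M) ^+ 2 * (N + M / 2).
  apply: mulr_ge0; first by rewrite sqr_ge0.
  by apply: addr_ge0 => //; apply: divr_ge0.
rewrite XE ger0_norm; last first.
  apply: addr_ge0 => //; apply: mulr_ge0; first by apply: mulr_ge0 => //; lra.
  by apply: mulr_ge0; rewrite sqr_ge0.
rewrite mulrA.
have E : t ^+ 2 * a ^+ 2 * (M + T * a + M / 2) + 3 / 2 * M * (t ^+ 2 * a ^+ 2)
   = t ^+ 2 * a ^+ 2 * (3 * M + T * a) by field.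
rewrite -E; lra.
Qed.

Lemma elemL (P K : R) (r : R -> R) : 0 <= K ->
  (forall t, `|t| <= 1 -> 0 <= t * P + r t) ->
  (forall t, `|t| <= 1 -> `|r t| <= K * t ^+ 2) -> P = 0.
Proof.
move=> K0 H1 H2; apply/eqP; apply/negPn/negP => Pn.
have Pp : 0 < `|P| by rewrite normr_gt0.
have den : 0 < 2 * (K + 1) + `|P| by lra.
set tau := `|P| / (2 * (K + 1) + `|P|).
have te : tau * (2 * (K + 1) + `|P|) = `|P| by rewrite /tau divfK // gt_eqF.
have t0 : 0 < tau by rewrite /tau divr_gt0.
have A0 : 0 <= K * tau by apply: mulr_ge0 => //; apply: ltW.
have B0 : 0 <= tau * `|P| by apply: mulr_ge0; apply: ltW.
have eq : 2 * (K * tau) + 2 * tau + tau * `|P| = tau * (2 * (K + 1) + `|P|) by ring.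
rewrite te in eq.
have t1 : tau <= 1.
  have : tau * (2 * (K + 1) + `|P|) <= 1 * (2 * (K + 1) + `|P|) by rewrite te; lra.
  by rewrite ler_pM2r.
have Kt : K * tau < `|P| by lra.
have ntau : `|tau| = tau by rewrite gtr0_norm.
have nmtau : `|- tau| = tau by rewrite normrN.
case: (ltrgt0P P) => [Ppos|Pneg|P0]; last by move: Pn; rewrite P0 eqxx.
- have tl : `|- tau| <= 1 by rewrite nmtau.
  have h1 := H1 (- tau) tl.
  have h2 := H2 (- tau) tl.
  move: h2; rewrite ler_norml => /andP[_ h2].
  have e1 : K * (- tau) ^+ 2 = tau * (K * tau) by rewrite sqrrN; ring.
  rewrite e1 in h2.
  have : - tau * P + tau * (K * tau) < 0.
    have -> : - tau * P + tau * (K * tau) = tau * (K * tau - P) by ring.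
    rewrite pmulr_rlt0 //. rewrite gtr0_norm // in Kt. lra.
  lra.
- have tl : `|tau| <= 1 by rewrite ntau.
  have h1 := H1 tau tl.
  have h2 := H2 tau tl.
  move: h2; rewrite ler_norml => /andP[_ h2].
  have e1 : K * tau ^+ 2 = tau * (K * tau) by ring.
  rewrite e1 in h2.
  have : tau * P + tau * (K * tau) < 0.
    have -> : tau * P + tau * (K * tau) = tau * (P + K * tau) by ring.
    rewrite pmulr_rlt0 //. rewrite ltr0_norm // in Kt. lra.
  lra.
Qed.

Lemma cubic_foc (u e : 'cV[R]_p) (P B kap : R) :
  (forall t, 0 <= t * P + t ^+ 2 * B + kap * (enorm (u + t *: e) ^+ 3 - enorm u ^+ 3)) ->
  P + 3 * kap * enorm u * innerp u e = 0.
Proof.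
move=> H.
have a0 := enorm_ge0 e. have M0 := enorm_ge0 u.
apply: (@elemL _ (`|B| + `|kap| * (enorm e ^+ 2 * (3 * enorm u + enorm e)))
  (fun t => t ^+ 2 * B + kap * (enorm (u + t *: e) ^+ 3 - enorm u ^+ 3 - 3 * enorm u * (t * innerp u e)))).
- apply: addr_ge0 => //; apply: mulr_ge0 => //; apply: mulr_ge0; first exact: exprn_ge0.
  apply: addr_ge0 => //; apply: mulr_ge0 => //.
- move=> t _; have := H t.
  have -> : t * (P + 3 * kap * enorm u * innerp u e) +
      (t ^+ 2 * B + kap * (enorm (u + t *: e) ^+ 3 - enorm u ^+ 3 - 3 * enorm u * (t * innerp u e)))
    = t * P + t ^+ 2 * B + kap * (enorm (u + t *: e) ^+ 3 - enorm u ^+ 3) by ring.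
  by [].
- move=> t t1.
  have cb := cubic_bound u e t.
  apply: le_trans (ler_normD _ _) _.
  have tt : `|t| * `|t| = t ^+ 2 by rewrite -normrM -expr2 ger0_norm // sqr_ge0.
  rewrite !normrM tt.
  have cb2 : t ^+ 2 * (enorm e ^+ 2 * (3 * enorm u + `|t| * enorm e))
      <= t ^+ 2 * (enorm e ^+ 2 * (3 * enorm u + enorm e)).
    apply: ler_wpM2l; first exact: sqr_ge0.
    apply: ler_wpM2l; first exact: exprn_ge0.
    rewrite lerD2l -[X in _ <= X]mul1r; apply: ler_wpM2r => //.
  have cb3 := le_trans cb cb2.
  have cb4 : `|kap| * `|enorm (u + t *: e) ^+ 3 - enorm u ^+ 3 - 3 * enorm u * (t * innerp u e)|
     <= `|kap| * (t ^+ 2 * (enorm e ^+ 2 * (3 * enorm u + enorm e))).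
    by apply: ler_wpM2l.
  move: cb4; set X := `|_ - _|; set Y := enorm e ^+ 2 * _ => cb4.
  have -> : (`|B| + `|kap| * Y) * t ^+ 2 = t ^+ 2 * `|B| + `|kap| * (t ^+ 2 * Y) by ring.
  by rewrite lerD2l.
Qed.


End S.

Arguments innerpE {R p}.
Arguments innerpC {R p}.
Arguments innerpDr {R p}.
Arguments innerpDl {R p}.
Arguments innerpZr {R p}.
Arguments innerpZl {R p}.
Arguments innerpNr {R p}.
Arguments innerpNl {R p}.
Arguments innerpBr {R p}.
Arguments innerpBl {R p}.
Arguments innerp0r {R p}.
Arguments innerp0l {R p}.
Arguments innerp_ge0 {R p}.
Arguments innerp_eq0 {R p}.
Arguments enorm_ge0 {R p}.
Arguments enorm_sq {R p}.
Arguments cauchy_schwarz2 {R p}.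
Arguments cauchy_schwarz {R p}.
Arguments enormD {R p}.
Arguments enormZ {R p}.
Arguments enormN {R p}.
Arguments cubic_bound {R p}.
Arguments elemL {R}.
Arguments cubic_foc {R p}.


Section S.
Variable R : realType.

Lemma innerp_col n m (a c : 'cV[R]_n) (b d : 'cV[R]_m) :
  innerp (col_mx a b) (col_mx c d) = innerp a c + innerp b d.
Proof.
rewrite !innerpE big_split_ord /=; congr (_ + _); apply: eq_bigr => i _.
  by rewrite !col_mxEu.
by rewrite !col_mxEd.
Qed.

Lemma enorm_col2 n m (a : 'cV[R]_n) (b : 'cV[R]_m) :
  enorm (col_mx a b) ^+ 2 = enorm a ^+ 2 + enorm b ^+ 2.
Proof. by rewrite !enorm_sq innerp_col. Qed.

Lemma innerp_sym p (H : 'M[R]_p) (a b : 'cV[R]_p) : (forall i j, H i j = H j i) ->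
  innerp a (H *m b) = innerp b (H *m a).
Proof.
move=> HS; rewrite !innerpE.
transitivity (\sum_i \sum_j a i 0 * H i j * b j 0).
  apply: eq_bigr => i _; rewrite mxE big_distrr /=; apply: eq_bigr => j _.
  by rewrite mulrA.
rewrite exchange_big /=; apply: eq_bigr => j _; rewrite mxE big_distrr /=.
apply: eq_bigr => i _; rewrite HS; ring.
Qed.

Lemma real_final (D G Y W U V X mu gam : R) :
  0 <= D -> 0 <= G -> 0 <= Y -> 0 <= W -> 0 <= U -> 0 <= V -> 0 < mu -> 0 < gam ->
  D ^+ 2 = U ^+ 2 + V ^+ 2 -> mu * D ^+ 2 <= D * G -> mu * D ^+ 2 <= D * Y ->
  W <= gam * D ^+ 2 -> X <= W * Y -> gam <= mu ^+ 2 / (4 * (G + 1)) ->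
  gam * (U + V) < mu /\ X - Y ^+ 2 <= - (mu ^+ 2 / 2) * D ^+ 2.
Proof.
move=> D0 G0 Y0 W0 U0 V0 mu0 g0 DUV DG DY WD XW gle.
have muDG : mu * D <= G.
  have [Dz|Dp] := eqVneq D 0; first by rewrite Dz mulr0.
  have Dpos : 0 < D by rewrite lt_def Dp D0.
  have e : D * (mu * D) = mu * D ^+ 2 by ring.
  by rewrite -(ler_pM2l Dpos) e.
have muDY : mu * D <= Y.
  have [Dz|Dp] := eqVneq D 0; first by rewrite Dz mulr0.
  have Dpos : 0 < D by rewrite lt_def Dp D0.
  have e : D * (mu * D) = mu * D ^+ 2 by ring.
  by rewrite -(ler_pM2l Dpos) e.
have gle' : gam * (4 * (G + 1)) <= mu ^+ 2.
  by rewrite -ler_pdivlMr // mulr_gt0 //; lra.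
have gD : gam * D <= mu / 4.
  have h1 : mu * (gam * D) <= gam * G by rewrite mulrCA; apply: ler_wpM2l => //; apply: ltW.
  have h5 : gam * G <= mu ^+ 2 / 4.
    rewrite ler_pdivlMr; last by lra.
    lra.
  have h2 : mu * (gam * D) <= mu * (mu / 4) by lra.
  by rewrite ler_pM2l in h2.
have UD : U <= D.
  by rewrite -ler_sqr ?nnegrE //; rewrite DUV lerDl sqr_ge0.
have VD : V <= D.
  by rewrite -ler_sqr ?nnegrE //; rewrite DUV lerDr sqr_ge0.
split.
  have : gam * (U + V) <= gam * (2 * D) by apply: ler_wpM2l; [apply: ltW | lra].
  lra.
have h3 : W * Y <= gam * D ^+ 2 * Y by apply: ler_wpM2r.
have h4 : gam * D ^+ 2 * Y <= mu / 4 * (D * Y).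
  have -> : gam * D ^+ 2 * Y = (gam * D) * (D * Y) by ring.
  by apply: ler_wpM2r => //; exact: mulr_ge0.
have h6 : mu * D * Y <= Y * Y by apply: ler_wpM2r.
have muD0 : 0 <= mu * D by apply: mulr_ge0 => //; apply: ltW.
have h7 : (mu * D) * (mu * D) <= Y * Y by apply: ler_pM.
have h8 : 0 <= (mu * D) * (mu * D) by apply: mulr_ge0.
have e1 : - (mu ^+ 2 / 2) * D ^+ 2 = - ((mu * D) * (mu * D)) / 2 by ring.
rewrite e1.
have e2 : mu / 4 * (D * Y) = (mu * D * Y) / 4 by ring.
rewrite e2 in h4.
move: h3 h4 h6 h7 h8 XW; rewrite !expr2.
move: (W * Y) (gam * (D * D) * Y) (mu * D * Y) (Y * Y) ((mu * D) * (mu * D)) => a b c e f.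
move=> *; lra.
Qed.

Lemma final_alg n m (H : 'M[R]_(n + m)) (g : 'cV[R]_(n + m)) (u : 'cV[R]_n) (v : 'cV[R]_m)
    (mu gam : R) :
  (forall i j, H i j = H j i) -> 0 < mu -> 0 < gam -> gam <= mu ^+ 2 / (4 * (enorm g + 1)) ->
  usubmx (g + H *m col_mx u v) = - (gam * enorm u) *: u ->
  dsubmx (g + H *m col_mx u v) = (gam * enorm v) *: v ->
  mu * enorm u ^+ 2 <= innerp (col_mx u 0) (H *m col_mx u 0) ->
  innerp (col_mx 0 v) (H *m col_mx 0 v) <= - (mu * enorm v ^+ 2) ->
  gam * (enorm u + enorm v) < mu /\
  innerp g (H *m col_mx u v) <= - (mu ^+ 2 / 2) * enorm (col_mx u v) ^+ 2.
Proof.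
move=> HS mu0 g0 gle Hu Hd Hx Hy.
set d := col_mx u v.
set E := col_mx u (0 : 'cV[R]_m).
set E' := col_mx (0 : 'cV[R]_n) v.
set Sd := col_mx u (- v).
set w := g + H *m d.
have dE : d = E + E' by rewrite /d /E /E' add_col_mx addr0 add0r.
have SdE : Sd = E - E' by rewrite /Sd /E /E' opp_col_mx oppr0 add_col_mx addr0 add0r.
have wE : w = col_mx (- (gam * enorm u) *: u) ((gam * enorm v) *: v).
  by rewrite -Hu -Hd vsubmxK.
have nd : enorm d ^+ 2 = enorm u ^+ 2 + enorm v ^+ 2 by rewrite enorm_col2.
have nSd : enorm Sd = enorm d.
  apply/eqP; rewrite -(@eqrXn2 _ 2) // ?enorm_ge0 //.
  by rewrite nd /Sd enorm_col2 enormN.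
have Ha : mu * enorm d ^+ 2 <= innerp Sd (H *m d).
  have -> : innerp Sd (H *m d) = innerp E (H *m E) - innerp E' (H *m E').
    rewrite SdE dE mulmxDr innerpBl !innerpDr (innerp_sym _ H E' E HS); ring.
  rewrite nd; lra.
have Hb : innerp Sd w <= 0.
  rewrite wE /Sd innerp_col !innerpZr innerpNl -!enorm_sq.
  have a1 : 0 <= gam * enorm u * enorm u ^+ 2.
    by apply: mulr_ge0; [apply: mulr_ge0; [apply: ltW|apply: enorm_ge0]|apply: exprn_ge0; apply: enorm_ge0].
  have a2 : 0 <= gam * enorm v * enorm v ^+ 2.
    by apply: mulr_ge0; [apply: mulr_ge0; [apply: ltW|apply: enorm_ge0]|apply: exprn_ge0; apply: enorm_ge0].
  lra.
have DG : mu * enorm d ^+ 2 <= enorm d * enorm g.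
  have e : innerp Sd (H *m d) = innerp Sd w - innerp Sd g by rewrite /w innerpDr; ring.
  have cs := cauchy_schwarz Sd g.
  have := ler_norm (- innerp Sd g); rewrite normrN nSd in cs * => hn.
  lra.
have DY : mu * enorm d ^+ 2 <= enorm d * enorm (H *m d).
  have cs := cauchy_schwarz Sd (H *m d).
  have := ler_norm (innerp Sd (H *m d)); rewrite nSd in cs * => hn.
  lra.
have Wle : enorm w <= gam * enorm d ^+ 2.
  rewrite -ler_sqr ?nnegrE ?enorm_ge0 //; last first.
    by apply: mulr_ge0; [apply: ltW|apply: exprn_ge0; apply: enorm_ge0].
  rewrite wE enorm_col2 !enormZ normrN !ger0_norm; last first.
  - by apply: mulr_ge0; [apply: ltW|apply: enorm_ge0].
  - by apply: mulr_ge0; [apply: ltW|apply: enorm_ge0].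
  rewrite nd.
  have p0 : 0 <= gam ^+ 2 * (enorm u ^+ 2 * enorm v ^+ 2).
    by apply: mulr_ge0; [apply: exprn_ge0; apply: ltW|apply: mulr_ge0; apply: exprn_ge0; apply: enorm_ge0].
  have -> : (gam * (enorm u ^+ 2 + enorm v ^+ 2)) ^+ 2
     = (gam * enorm u * enorm u) ^+ 2 + (gam * enorm v * enorm v) ^+ 2
       + 2 * (gam ^+ 2 * (enorm u ^+ 2 * enorm v ^+ 2)) by ring.
  lra.
have Fg : innerp g (H *m d) = innerp w (H *m d) - enorm (H *m d) ^+ 2.
  by rewrite enorm_sq /w innerpDl; ring.
have Xle : innerp w (H *m d) <= enorm w * enorm (H *m d).
  exact: le_trans (ler_norm _) (cauchy_schwarz _ _).
rewrite Fg.
exact: (@real_final _ _ _ _ _ _ _ _ _ (enorm_ge0 d) (enorm_ge0 g) (enorm_ge0 _) (enorm_ge0 w)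
  (enorm_ge0 u) (enorm_ge0 v) mu0 g0 nd DG DY Wle Xle gle).
Qed.

End S.


Section S.
Variable R : realType.
Variables n m : nat.
Variable f : 'cV[R]_(n + m) -> R.

Lemma Fop_sq z j : Fop f z j 0 * Fop f z j 0 = partialD f j z * partialD f j z.
Proof.
rewrite /Fop; case: (split_ordP j) => j' ->.
  by rewrite col_mxEu !mxE.
by rewrite col_mxEd !mxE mulrNN.
Qed.

Lemma meritE : merit f = \sum_(j < n + m) (fun z => 1 / 2 * (partialD f j z * partialD f j z)).
Proof.
apply/funext => z; rewrite fct_sumE /merit enorm_sq innerpE mulr_sumr.
by apply: eq_bigr => j _; rewrite Fop_sq.
Qed.

Lemma grad_merit zk :
  (forall i j z, derivable (partialD f i) z (basis_vec R j)) ->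
  gradv (merit f) zk = hessmx f zk *m gradv f zk.
Proof.
move=> d2; apply/matrixP => i c; rewrite (ord1 c) !mxE /partialD meritE.
have H : is_derive zk (basis_vec R i)
   (\sum_(j < n + m) (fun z => 1 / 2 * (partialD f j z * partialD f j z)))
   (\sum_(j < n + m) (1 / 2 *: (partialD f j zk *: 'D_(basis_vec R i) (partialD f j) zk
                                + partialD f j zk *: 'D_(basis_vec R i) (partialD f j) zk))).
  apply: is_derive_sum => j.
  eapply is_deriveZ. eapply is_deriveM; apply: derivableP; exact: d2.
rewrite derive_val; apply: eq_bigr => j _; rewrite !mxE /GRing.scale /=.
have -> : 'D_(basis_vec R i) (partialD f j) zk = partialD (partialD f j) i zk by [].
by field.
Qed.

Lemma quad_shift p (H : 'M[R]_p) (d E : 'cV[R]_p) (t : R) : (forall i j, H i j = H j i) ->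
  innerp (d + t *: E) (H *m (d + t *: E))
  = innerp d (H *m d) + 2 * t * innerp E (H *m d) + t ^+ 2 * innerp E (H *m E).
Proof.
move=> HS; rewrite mulmxDr -scalemxAr innerpDl !innerpDr !innerpZl !innerpZr.
rewrite (innerp_sym _ _ H d E HS); ring.
Qed.

Lemma fmodelE zk gam x y :
  fmodel f zk gam x y = f zk + innerp (gradv f zk) (col_mx x y - zk)
    + 1 / 2 * innerp (col_mx x y - zk) (hessmx f zk *m (col_mx x y - zk))
    + gam / 3 * enorm (x - usubmx zk) ^+ 3 - gam / 3 * enorm (y - dsubmx zk) ^+ 3.
Proof. by rewrite /fmodel /= /innerp mulmxA. Qed.

Lemma col_shift_x zk (xt e : 'cV[R]_n) (yt : 'cV[R]_m) (t : R) :
  col_mx (xt + t *: e) yt - zk = col_mx (xt - usubmx zk) (yt - dsubmx zk) + t *: col_mx e 0.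
Proof.
rewrite -{1}(vsubmxK zk) opp_col_mx add_col_mx scale_col_mx scaler0 add_col_mx addr0.
by rewrite addrAC.
Qed.

Lemma col_shift_y zk (xt : 'cV[R]_n) (yt e : 'cV[R]_m) (t : R) :
  col_mx xt (yt + t *: e) - zk = col_mx (xt - usubmx zk) (yt - dsubmx zk) + t *: col_mx 0 e.
Proof.
rewrite -{1}(vsubmxK zk) opp_col_mx add_col_mx scale_col_mx scaler0 add_col_mx addr0.
by rewrite [yt + _ - _]addrAC.
Qed.

Lemma foc zk gam (xt : 'cV[R]_n) (yt : 'cV[R]_m) :
  (forall i j, hessmx f zk i j = hessmx f zk j i) ->
  is_saddle (fmodel f zk gam) xt yt ->
  let u := xt - usubmx zk in let v := yt - dsubmx zk in
  let w := gradv f zk + hessmx f zk *m col_mx u v in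
  usubmx w = - (gam * enorm u) *: u /\ dsubmx w = (gam * enorm v) *: v.
Proof.
move=> HS Hs u v w.
set g := gradv f zk; set H := hessmx f zk; set d := col_mx u v.
have wE : w = col_mx (usubmx w) (dsubmx w) by rewrite vsubmxK.
have d0 : col_mx xt yt - zk = d.
  by rewrite /d /u /v -{1}(vsubmxK zk) opp_col_mx add_col_mx.
split.
- have key : forall e : 'cV[R]_n,
      innerp e (usubmx w) + 3 * (gam / 3) * enorm u * innerp u e = 0.
    move=> e.
    set E := col_mx e (0 : 'cV[R]_m).
    have PE : innerp g E + innerp E (H *m d) = innerp e (usubmx w).
      rewrite (innerpC g E) -innerpDr -/w wE /E innerp_col innerp0l addr0.
      by rewrite col_mxKu.
    rewrite -PE; apply: (cubic_foc u e (innerp g E + innerp E (H *m d)) (innerp E (H *m E) / 2) (gam / 3)).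
    move=> t.
    have := (Hs (xt + t *: e) yt).2.
    rewrite !fmodelE col_shift_x -/u -/v -/d d0.
    have ex : xt + t *: e - usubmx zk = u + t *: e by rewrite /u addrAC.
    rewrite ex -/E (quad_shift _ _ _ _ _ HS) innerpDr innerpZr -/g -/H.
    move=> h; lra.
  have r0 : usubmx w + (gam * enorm u) *: u = 0.
    apply: innerp_eq0; rewrite innerpDr innerpZr (innerpC _ u).
    have := key (usubmx w + (gam * enorm u) *: u); lra.
  by apply/eqP; rewrite scaleNr -addr_eq0 r0.
- have key : forall e : 'cV[R]_m,
      - innerp e (dsubmx w) + 3 * (gam / 3) * enorm v * innerp v e = 0.
    move=> e.
    set E := col_mx (0 : 'cV[R]_n) e.
    have PE : innerp g E + innerp E (H *m d) = innerp e (dsubmx w).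
      rewrite (innerpC g E) -innerpDr -/w wE /E innerp_col innerp0l add0r.
      by rewrite col_mxKd.
    rewrite -PE; apply: (cubic_foc v e (- (innerp g E + innerp E (H *m d))) (- (innerp E (H *m E) / 2)) (gam / 3)).
    move=> t.
    have := (Hs xt (yt + t *: e)).1.
    rewrite !fmodelE col_shift_y -/u -/v -/d d0.
    have ey : yt + t *: e - dsubmx zk = v + t *: e by rewrite /v addrAC.
    rewrite ey -/E (quad_shift _ _ _ _ _ HS) innerpDr innerpZr -/g -/H.
    move=> h; lra.
  have r0 : dsubmx w - (gam * enorm v) *: v = 0.
    apply: innerp_eq0; rewrite innerpBr innerpZr (innerpC _ v).
    have := key (dsubmx w - (gam * enorm v) *: v); lra.
  by apply/eqP; rewrite -subr_eq0 r0.
Qed.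

Lemma sum_hess zk (E : 'cV[R]_(n + m)) :
  (forall i j, hessmx f zk i j = hessmx f zk j i) ->
  \sum_i E i 0 * \sum_j E j 0 * partialD (partialD f i) j zk = innerp E (hessmx f zk *m E).
Proof.
move=> HS; rewrite innerpE; apply: eq_bigr => i _; rewrite mxE; congr (_ * _).
apply: eq_bigr => j _; rewrite HS mxE; ring.
Qed.

Lemma col_lin_x (zk : 'cV[R]_(n + m)) (u : 'cV[R]_n) (t : R) :
  col_mx (usubmx zk + t *: u) (dsubmx zk) = t *: col_mx u 0 + zk.
Proof.
by rewrite -{3}(vsubmxK zk) scale_col_mx scaler0 add_col_mx add0r addrC.
Qed.

Lemma col_lin_y (zk : 'cV[R]_(n + m)) (v : 'cV[R]_m) (t : R) :
  col_mx (usubmx zk) (dsubmx zk + t *: v) = t *: col_mx 0 v + zk.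
Proof.
by rewrite -{3}(vsubmxK zk) scale_col_mx scaler0 add_col_mx add0r addrC.
Qed.

Lemma mid_eq p (x0 a : 'cV[R]_p) (t : R) :
  1 / 2 *: (x0 + t *: a) + (1 - 1 / 2) *: (x0 + (- t) *: a) = x0.
Proof. by apply/matrixP => i j; rewrite !mxE; field. Qed.

Lemma diff_eq p (x0 a : 'cV[R]_p) (t : R) :
  enorm ((x0 + t *: a) - (x0 + (- t) *: a)) ^+ 2 = 4 * (t ^+ 2 * enorm a ^+ 2).
Proof.
have -> : (x0 + t *: a) - (x0 + (- t) *: a) = (2 * t) *: a.
  apply/matrixP => i j; rewrite !mxE; ring.
rewrite enormZ exprMn (real_normK (num_real _)); ring.
Qed.

Lemma hess_lb_x (mu : R) zk (u : 'cV[R]_n)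
  (d1 : forall i z, derivable f z (basis_vec R i))
  (c1 : forall i, continuous (partialD f i))
  (d2 : forall i j z, derivable (partialD f i) z (basis_vec R j))
  (c2 : forall i j, continuous (partialD (partialD f i) j)) :
  (forall y : 'cV[R]_m, strongly_convex mu (fun x : 'cV[R]_n => f (col_mx x y))) ->
  (forall i j, hessmx f zk i j = hessmx f zk j i) ->
  mu * enorm u ^+ 2 <= innerp (col_mx u 0) (hessmx f zk *m col_mx u 0).
Proof.
move=> Hcvx HS.
rewrite -sum_hess // -[X in _ <= X]mul1r.
apply: (@second_order R (n + m) f d1 c1 d2 c2 zk (col_mx u 0) _ 1 (or_introl erefl)).
move=> t.
have h12 : (0 <= 1 / 2 :> R) && (1 / 2 <= 1 :> R) by apply/andP; split; lra.
have H := Hcvx (dsubmx zk) (usubmx zk + t *: u) (usubmx zk + (- t) *: u) (1 / 2) h12.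
rewrite mid_eq diff_eq vsubmxK !col_lin_x in H.
rewrite scalerN -scaleNr.
lra.
Qed.

Lemma hess_ub_y (mu : R) zk (v : 'cV[R]_m)
  (d1 : forall i z, derivable f z (basis_vec R i))
  (c1 : forall i, continuous (partialD f i))
  (d2 : forall i j z, derivable (partialD f i) z (basis_vec R j))
  (c2 : forall i j, continuous (partialD (partialD f i) j)) :
  (forall x : 'cV[R]_n, strongly_concave mu (fun y : 'cV[R]_m => f (col_mx x y))) ->
  (forall i j, hessmx f zk i j = hessmx f zk j i) ->
  innerp (col_mx 0 v) (hessmx f zk *m col_mx 0 v) <= - (mu * enorm v ^+ 2).
Proof.
move=> Hccv HS.
rewrite -sum_hess // lerNr -mulN1r.
apply: (@second_order R (n + m) f d1 c1 d2 c2 zk (col_mx 0 v) _ (-1) (or_intror erefl)).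
move=> t.
have h12 : (0 <= 1 / 2 :> R) && (1 / 2 <= 1 :> R) by apply/andP; split; lra.
have H := Hccv (usubmx zk) (dsubmx zk + t *: v) (dsubmx zk + (- t) *: v) (1 / 2) h12.
rewrite /= mid_eq diff_eq vsubmxK !col_lin_y in H.
rewrite scalerN -scaleNr.
lra.
Qed.

End S.

End Helpers.
Import Helpers.

Theorem proposition3p3 (R : realType) (n m : nat) (f : 'cV[R]_(n + m) -> R)
    (mu L L2 : R) (zk : 'cV[R]_(n + m)) :
  C2 f ->
  0 < mu ->
  (forall y : 'cV[R]_m, strongly_convex mu (fun x : 'cV[R]_n => f (col_mx x y))) ->
  (forall x : 'cV[R]_n, strongly_concave mu (fun y : 'cV[R]_m => f (col_mx x y))) ->
  (forall z, opnorm (jacmx (Fop f) z) <= L) ->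
  (forall z w, opnorm (jacmx (Fop f) z - jacmx (Fop f) w) <= L2 * enorm (z - w)) ->
  exists gamma0 : R, 0 < gamma0 /\
    forall gamma : R, 0 < gamma <= gamma0 ->
    forall (xt : 'cV[R]_n) (yt : 'cV[R]_m),
      is_saddle (fmodel f zk gamma) xt yt ->
      let u := xt - usubmx zk in
      let v := yt - dsubmx zk in
      let d := col_mx u v in
      gamma * (enorm u + enorm v) < mu /\
      innerp (gradv (merit f) zk) d <= - (mu ^+ 2 / 2) * enorm d ^+ 2.
Proof.
move=> [_ [d1 [c1 [d2 c2]]]] mu0 Hcvx Hccv _ _.
have HS : forall i j, hessmx f zk i j = hessmx f zk j i.
  by move=> i j; rewrite !mxE; exact: (@schwarz R (n + m) f d1 d2 c2 zk j i).
exists (mu ^+ 2 / (4 * (enorm (gradv f zk) + 1))); split.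
  apply: divr_gt0; first exact: exprn_gt0.
  have := enorm_ge0 (gradv f zk); lra.
move=> gam /andP[g0 gle] xt yt Hs.
have [Hu Hd] := @foc R n m f zk gam xt yt HS Hs.
have Hx := @hess_lb_x R n m f mu zk (xt - usubmx zk) d1 c1 d2 c2 Hcvx HS.
have Hy := @hess_ub_y R n m f mu zk (yt - dsubmx zk) d1 c1 d2 c2 Hccv HS.
have [G1 G2] := @final_alg R n m _ _ _ _ mu gam HS mu0 g0 gle Hu Hd Hx Hy.
move=> u v d; split => //.
rewrite (@grad_merit R n m f zk d2) innerpC (@innerp_sym R _ _ _ _ HS).
exact: G2.
Qed.
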